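(* A hyperimaginary $e$ is normal if and only if for every index set $I$ (small), the equivalence relation $\equiv_e$ on $I$-sequences of elements of $\mathfrak{C}$ is $0$-type-definable.
   Context: $\mathfrak{C}$ is a monster model of a complete first-order theory $T$; ''small'' means of cardinality smaller than that of $\mathfrak{C}$. A hyperimaginary is an equivalence class $e=a_E$ of a possibly infinite small tuple $a$ under a $0$-type-definable (type-definable without parameters) equivalence relation $E$; automorphisms act by $f(a_E)=f(a)_E$. $\mathrm{Fix}(e)=\{f\in\mathrm{Aut}(\mathfrak{C}): f(e)=e\}$. $e$ is normal if $\mathrm{Fix}(e)$ is a normal subgroup of $\mathrm{Aut}(\mathfrak{C})$. For $I$-sequences $b,c$, $b\equiv_e c$ means $f(b)=c$ for some $f\in\mathrm{Fix}(e)$ (same type over $e$). *)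

(* Defs.v *)
From mathcomp Require Import all_boot.
From Stdlib Require List.

Set Implicit Arguments.
Unset Strict Implicit.
Unset Printing Implicit Defensive.

Record signature := Signature {
  fsym : Type; farity : fsym -> nat;
  rsym : Type; rarity : rsym -> nat }.

Section Syntax.
Variable L : signature.

Inductive term (V : Type) : Type :=
  | tvar : V -> term V
  | tapp : forall f : fsym L, ('I_(farity f) -> term V) -> term V.

(* First-order formulas (without parameters) with free variables from V;
   the existential quantifier binds the new variable [None]. *)
Inductive formula : Type -> Type :=
  | feq  : forall V, term V -> term V -> formula V
  | frel : forall V (r : rsym L), ('I_(rarity r) -> term V) -> formula V
  | fneg : forall V, formula V -> formula V
  | fand : forall V, formula V -> formula V -> formula V
  | fex  : forall V, formula (option V) -> formula V.
End Syntax.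

Record structure (L : signature) := Structure {
  carrier :> Type;
  fint : forall f : fsym L, ('I_(farity f) -> carrier) -> carrier;
  rint : forall r : rsym L, ('I_(rarity r) -> carrier) -> Prop }.

Section Semantics.
Variables (L : signature) (M : structure L).

Fixpoint teval (V : Type) (s : V -> M) (t : term L V) : M :=
  match t with
  | tvar v => s v
  | tapp f args => @fint L M f (fun i => teval s (args i))
  end.

Definition ext_env (V : Type) (s : V -> M) (m : M) : option V -> M :=
  fun o => match o with Some v => s v | None => m end.

Fixpoint sat (V : Type) (phi : formula L V) : (V -> M) -> Prop :=
  match phi in formula _ V0 return (V0 -> M) -> Prop with
  | feq _ t u => fun s => teval s t = teval s u
  | frel _ r args => fun s => @rint L M r (fun i => teval s (args i))
  | fneg _ p => fun s => ~ sat p s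
  | fand _ p q => fun s => sat p s /\ sat q s
  | fex _ p => fun s => exists m : M, sat p (ext_env s m)
  end.

Definition small (J : Type) : Prop :=
  (exists g : J -> M, injective g) /\ ~ (exists g : M -> J, injective g).

Definition automorphism (f : M -> M) : Prop :=
  bijective f /\
  (forall (g : fsym L) (x : 'I_(farity g) -> M),
      f (@fint L M g x) = @fint L M g (fun i => f (x i))) /\
  (forall (r : rsym L) (x : 'I_(rarity r) -> M),
      @rint L M r x <-> @rint L M r (fun i => f (x i))).

Definition same_type (J : Type) (b c : J -> M) : Prop :=
  forall phi : formula L J, sat phi b <-> sat phi c.

(* Monster model: saturated in its own cardinality (every finitely satisfiable
   partial 1-type over a small parameter set is realized) and strongly
   homogeneous (small tuples with the same type are conjugate by an
   automorphism). *)
Definition monster : Prop :=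
  (forall (J : Type) (a : J -> M), small J ->
     forall Sigma : formula L (option J) -> Prop,
       (forall l : list (formula L (option J)),
           (forall phi, List.In phi l -> Sigma phi) ->
           exists m : M, forall phi, List.In phi l -> sat phi (ext_env a m)) ->
       exists m : M, forall phi, Sigma phi -> sat phi (ext_env a m))
  /\
  (forall (J : Type) (b c : J -> M), small J -> same_type b c ->
     exists f, automorphism f /\ forall j, f (b j) = c j).

(* A binary relation on I-sequences is 0-type-definable: it is the set of
   realizations of a partial type (set of parameter-free formulas) in the
   variables I + I (left copy for the first sequence, right for the second). *)
Definition type_definable2 (I : Type) (R : (I -> M) -> (I -> M) -> Prop) :=
  exists Sigma : formula L (I + I) -> Prop,
    forall b c : I -> M,
      R b c <-> (forall phi, Sigma phi -> sat phi (fun v => match v with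
                                                         | inl i => b i
                                                         | inr i => c i end)).

Definition fo_equivalence (I : Type) (E : (I -> M) -> (I -> M) -> Prop) :=
  (forall x, E x x) /\ (forall x y, E x y -> E y x) /\
  (forall x y z, E x y -> E y z -> E x z).

(* Hyperimaginary e = a_E, given by a small tuple a : I -> M and a
   0-type-definable equivalence relation E on I-sequences. *)
Definition fixes (I : Type) (E : (I -> M) -> (I -> M) -> Prop) (a : I -> M)
  (f : M -> M) : Prop := E (fun i => f (a i)) a.

Definition normal_hyp (I : Type) (E : (I -> M) -> (I -> M) -> Prop) (a : I -> M) :=
  forall g ginv h : M -> M,
    automorphism g -> cancel g ginv -> cancel ginv g ->
    automorphism h -> fixes E a h ->
    fixes E a (fun x => g (h (ginv x))).

Definition equiv_over (I : Type) (E : (I -> M) -> (I -> M) -> Prop) (a : I -> M)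
  (J : Type) (b c : J -> M) : Prop :=
  exists f, automorphism f /\ fixes E a f /\ forall j, f (b j) = c j.
End Semantics.

(* Main.v *)
Require Import Defs.
From mathcomp Require Import all_boot.
From mathcomp Require boolp classical_sets.
From Stdlib Require Import ClassicalEpsilon Classical FunctionalExtensionality.

Set Implicit Arguments.
Unset Strict Implicit.
Unset Printing Implicit Defensive.

Lemma zorn_sets (T : Type) (P : (T -> Prop) -> Prop) :
  (forall F : (T -> Prop) -> Prop, (forall X, F X -> P X) ->
     (forall X Y, F X -> F Y -> (forall x, X x -> Y x) \/ (forall x, Y x -> X x)) ->
     P (fun x => exists2 X, F X & X x)) ->
  exists A, P A /\ forall B, (forall x, A x -> B x) -> P B -> forall x, B x -> A x.
Proof.
move=> H.
have [A [PA maxA]] := @classical_sets.Zorn_bigcup T P (fun F FP Ftot => H F FP Ftot).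
exists A; split=> // B AB PB x Bx.
apply: NNPP => nAx.
apply: (maxA B) => //; split=> // BA.
exact: nAx (BA x Bx).
Qed.

Section Syn.
Variable L : signature.

Fixpoint tmap (V V' : Type) (h : V -> V') (t : term L V) : term L V' :=
  match t with
  | tvar v => tvar L (h v)
  | tapp f args => tapp (fun i => tmap h (args i))
  end.

Fixpoint fmap (V : Type) (phi : formula L V) : forall V', (V -> V') -> formula L V' :=
  match phi in formula _ V0 return forall V', (V0 -> V') -> formula L V' with
  | feq _ t u => fun V' h => feq (tmap h t) (tmap h u)
  | Defs.frel _ r args => fun V' h => Defs.frel (fun i => tmap h (args i))
  | fneg _ p => fun V' h => fneg (fmap p h)
  | fand _ p q => fun V' h => fand (fmap p h) (fmap q h)
  | fex _ p => fun V' h => fex (fmap p (option_map h))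
  end.

Definition ftrue (V : Type) : formula L V := fex (feq (tvar L None) (tvar L None)).
Definition fimp (V : Type) (p q : formula L V) := fneg (fand p (fneg q)).
Definition fiff (V : Type) (p q : formula L V) := fand (fimp p q) (fimp q p).

Variable M : structure L.

Lemma teval_ext (V : Type) (t : term L V) (s s' : V -> M) :
  (forall v, s v = s' v) -> teval s t = teval s' t.
Proof.
move=> e; elim: t => [v|f args IH] /=; first exact: e.
by congr (fint _); apply: functional_extensionality => i; apply: IH.
Qed.

Lemma sat_ext (V : Type) (phi : formula L V) :
  forall (s s' : V -> M), (forall v, s v = s' v) -> (sat phi s <-> sat phi s').
Proof.
elim: phi => {V} [V t u|V r args|V p IH|V p IHp q IHq|V p IH] s s' e /=.
- by rewrite (teval_ext t e) (teval_ext u e).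
- have -> : (fun i => teval s (args i)) = (fun i => teval s' (args i)).
    by apply: functional_extensionality => i; apply: teval_ext.
  by [].
- by rewrite (IH s s' e).
- by rewrite (IHp s s' e) (IHq s s' e).
- have E' : forall m, forall v, ext_env s m v = ext_env s' m v by move=> m [v|] //=.
  by split=> -[m Hm]; exists m; [apply/(IH _ _ (E' m))|apply/(IH _ _ (E' m))].
Qed.

Lemma sat_ext1 (V : Type) (phi : formula L V) (s s' : V -> M) :
  (forall v, s v = s' v) -> sat phi s -> sat phi s'.
Proof. by move=> e; move/(sat_ext phi e). Qed.

Lemma teval_tmap (V V' : Type) (h : V -> V') (t : term L V) (s : V' -> M) :
  teval s (tmap h t) = teval (fun v => s (h v)) t.
Proof.
elim: t => [v|f args IH] //=.
by congr (fint _); apply: functional_extensionality => i; apply: IH.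
Qed.

Lemma sat_fmap (V : Type) (phi : formula L V) :
  forall V' (h : V -> V') (s : V' -> M), sat (fmap phi h) s <-> sat phi (fun v => s (h v)).
Proof.
elim: phi => {V} [V t u|V r args|V p IH|V p IHp q IHq|V p IH] V' h s /=.
- by rewrite !teval_tmap.
- have -> : (fun i => teval s (tmap h (args i))) = (fun i => teval (fun v => s (h v)) (args i)).
    by apply: functional_extensionality => i; apply: teval_tmap.
  by [].
- by rewrite IH.
- by rewrite IHp IHq.
- split=> -[m Hm]; exists m.
  + by move/IH: Hm; apply: sat_ext1 => -[v|].
  + by apply/IH; move: Hm; apply: sat_ext1 => -[v|].
Qed.

Lemma sat_ftrue (V : Type) (s : V -> M) (m : M) : sat (ftrue V) s.
Proof. by exists m. Qed.

Lemma sat_fiff (V : Type) (p q : formula L V) (s : V -> M) :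
  sat (fiff p q) s <-> (sat p s <-> sat q s).
Proof. rewrite /=; split; [case=> H1 H2; split=> Hx; apply: NNPP => Hn; auto|].
 by case=> H1 H2; split=> -[]; auto.
Qed.

End Syn.

Section Sem.
Variable L : signature.
Variable M : structure L.

Lemma In_mem (T : eqType) (x : T) (s : seq T) : x \in s -> List.In x s.
Proof. elim: s => //= y s IH; rewrite in_cons => /orP[/eqP->|/IH]; auto. Qed.

Lemma fin_union (n : nat) (V : Type) (P : 'I_n -> list V -> Prop) :
  (forall i, exists l, P i l) ->
  exists l : list V, forall i, exists2 li, P i li & forall x, List.In x li -> List.In x l.
Proof.
move=> H.
have F : forall i, {l | P i l} := fun i => constructive_indefinite_description _ (H i).
exists (List.concat (List.map (fun i => proj1_sig (F i)) (enum 'I_n))).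
move=> i; exists (proj1_sig (F i)); first exact: proj2_sig (F i).
move=> x Hx; apply/List.in_concat; exists (proj1_sig (F i)); split=> //.
apply: List.in_map; apply: In_mem; exact: mem_enum.
Qed.

Lemma term_supp (V : Type) (t : term L V) : exists l : list V,
  forall s s' : V -> M, (forall v, List.In v l -> s v = s' v) -> teval s t = teval s' t.
Proof.
elim: t => [v|f args IH].
- by exists [:: v] => s s' e /=; apply: e; left.
- have [l Hl] := fin_union IH; exists l => s s' e /=.
  congr (fint _); apply: functional_extensionality => i.
  have [li Hi Hsub] := Hl i; apply: Hi => v Hv; exact/e/Hsub.
Qed.

Definition somes (V : Type) (l : list (option V)) : list V :=
  List.flat_map (fun o => match o with Some v => [:: v] | None => [::] end) l.

Lemma formula_supp (V : Type) (phi : formula L V) : exists l : list V,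
  forall s s' : V -> M, (forall v, List.In v l -> s v = s' v) -> (sat phi s <-> sat phi s').
Proof.
elim: phi => {V} [V t u|V r args|V p IH|V p IHp q IHq|V p IH].
- have [l1 H1] := term_supp t; have [l2 H2] := term_supp u.
  exists (l1 ++ l2)%list => s s' e /=.
  rewrite (H1 s s') ?(H2 s s') // => v Hv; apply: e; apply: List.in_or_app; auto.
- have [l Hl] := fin_union (fun i => term_supp (args i)); exists l => s s' e /=.
  have -> // : (fun i => teval s (args i)) = (fun i => teval s' (args i)).
  apply: functional_extensionality => i.
  have [li Hi Hsub] := Hl i; apply: Hi => v Hv; exact/e/Hsub.
- have [l Hl] := IH; exists l => s s' e /=; by rewrite (Hl s s' e).
- have [l1 H1] := IHp; have [l2 H2] := IHq.
  exists (l1 ++ l2)%list => s s' e /=.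
  rewrite (H1 s s') ?(H2 s s') // => v Hv; apply: e; apply: List.in_or_app; auto.
- have [l Hl] := IH; exists (somes l) => s s' e /=.
  have E' : forall m, forall v, List.In v l -> ext_env s m v = ext_env s' m v.
    move=> m [v|] //= Hv; apply: e; apply/List.in_flat_map; exists (Some v); split=> //=; auto.
  by split=> -[m Hm]; exists m; [apply/(Hl _ _ (E' m))|apply/(Hl _ _ (E' m))].
Qed.

Hypothesis m0 : M.

Lemma proj_aux (X : Type) (phi : formula L X) (l : list X) : forall (Y : Type) (r : Y -> X),
  injective r ->
  (forall s s' : X -> M, (forall x, List.In x l \/ (exists y, r y = x) -> s x = s' x) ->
     (sat phi s <-> sat phi s')) ->
  exists chi : formula L Y, forall s : Y -> M,
    sat chi s <-> exists t : X -> M, (forall y, t (r y) = s y) /\ sat phi t.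
Proof.
elim: l => [|u l IH] Y r rinj Hs.
- pose rho (x : X) : option Y := match excluded_middle_informative (exists y, r y = x) with
    | left e => Some (proj1_sig (constructive_indefinite_description _ e))
    | right _ => None end.
  have rhoE : forall y, rho (r y) = Some y.
    move=> y; rewrite /rho; case: excluded_middle_informative => [e|[]]; last by exists y.
    congr Some; apply: rinj; exact: proj2_sig (constructive_indefinite_description _ e).
  exists (fex (fmap phi rho)) => s /=; split.
  + case=> m /sat_fmap Hm; exists (fun x => ext_env s m (rho x)); split=> // y.
    by rewrite rhoE.
  + case=> t [Ht Hphi]; exists m0; apply/sat_fmap.
    apply/(Hs _ t) => // x [[]|[y <-]]; by rewrite rhoE Ht.
- case: (classic (exists y, r y = u)) => [[y0 ry0]|nu].
  + apply: IH => // s s' e; apply: Hs => x [[<-|Hx]|Hx]; apply: e; auto.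
    by right; exists y0.
  + pose r' (o : option Y) : X := match o with Some y => r y | None => u end.
    have r'inj : injective r'.
      move=> [a|] [b|] //=; [by move/rinj->| |]; move=> E; case: nu; by eauto.
    have [chi' Hchi'] := IH (option Y) r' r'inj
      (fun s s' e => Hs s s' (fun x H => e x (match H with
          | or_introl (or_introl E) => or_intror (ex_intro _ None E)
          | or_introl (or_intror H) => or_introl H
          | or_intror (ex_intro y E) => or_intror (ex_intro _ (Some y) E) end))).
    exists (fex chi') => s /=; split.
    * case=> m /Hchi' [t [Ht Hphi]]; exists t; split=> // y; exact: (Ht (Some y)).
    * case=> t [Ht Hphi]; exists (t u); apply/Hchi'; exists t; split=> // -[y|] //=.
Qed.

Lemma proj_lemma (X : Type) (phi : formula L X) (Y : Type) (r : Y -> X) :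
  injective r ->
  exists chi : formula L Y, forall s : Y -> M,
    sat chi s <-> exists t : X -> M, (forall y, t (r y) = s y) /\ sat phi t.
Proof.
move=> rinj; have [l Hl] := formula_supp phi.
apply: (proj_aux (l:=l)) => // s s' e; apply: Hl => v Hv; apply: e; auto.
Qed.

End Sem.

Section Aut.
Variable L : signature.
Variable M : structure L.

Lemma teval_aut (f : M -> M) (Hf : automorphism f) (V : Type) (s : V -> M) (t : term L V) :
  teval (fun v => f (s v)) t = f (teval s t).
Proof.
case: Hf => _ [Hfun _]; elim: t => [v|g args IH] //=.
rewrite Hfun; congr (fint _); apply: functional_extensionality => i; exact: IH.
Qed.

Lemma sat_aut (f : M -> M) (Hf : automorphism f) (V : Type) (phi : formula L V) :
  forall s : V -> M, sat phi (fun v => f (s v)) <-> sat phi s.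
Proof.
have [[g fg gf] [Hfun Hrel]] := Hf.
elim: phi => {V} [V t u|V r args|V p IH|V p IHp q IHq|V p IH] s /=.
- rewrite !teval_aut //; split=> [/(can_inj fg)|->] //.
- have -> : (fun i => teval (fun v => f (s v)) (args i)) = (fun i => f (teval s (args i))).
    by apply: functional_extensionality => i; rewrite teval_aut.
  by rewrite -Hrel.
- by rewrite IH.
- by rewrite IHp IHq.
- split=> -[m Hm].
  + exists (g m); apply/IH; move: Hm; apply: sat_ext1 => -[v|] //=; by rewrite gf.
  + exists (f m); move/IH: Hm; apply: sat_ext1 => -[v|] //=.
Qed.

Lemma aut_inv (f g : M -> M) : automorphism f -> cancel f g -> cancel g f -> automorphism g.
Proof.
move=> [_ [Hfun Hrel]] fg gf; split; first by exists f.
split.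
- move=> h x; apply: (can_inj fg); rewrite gf Hfun; congr (fint _).
  by apply: functional_extensionality => i; rewrite gf.
- move=> r x; rewrite (Hrel r (fun i => g (x i))).
  have -> // : (fun i => f (g (x i))) = x by apply: functional_extensionality => i; rewrite gf.
Qed.

Lemma aut_comp (f g : M -> M) : automorphism f -> automorphism g -> automorphism (fun x => f (g x)).
Proof.
move=> [[f' ff' f'f] [Ffun Frel]] [[g' gg' g'g] [Gfun Grel]]; split.
- exists (fun x => g' (f' x)) => x /=; [by rewrite ff' gg'|by rewrite g'g f'f].
- split=> [h x|r x]; first by rewrite Gfun Ffun.
  by rewrite Grel Frel.
Qed.

End Aut.

From Stdlib Require Import ProofIrrelevance.

Section Satm.
Variable L : signature.
Variable M : structure L.
Hypothesis m0 : M.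

Definition penv (P W : Type) (p : P -> M) (t : W -> M) : P + W -> M :=
  fun v => match v with inl x => p x | inr w => t w end.

Definition sat1 (Q : Type) := forall (q : Q -> M) (Sig : formula L (option Q) -> Prop),
  (forall l : list (formula L (option Q)), (forall phi, List.In phi l -> Sig phi) ->
     exists m, forall phi, List.In phi l -> sat phi (ext_env q m)) ->
  exists m, forall phi, Sig phi -> sat phi (ext_env q m).

Fixpoint conjl (V : Type) (l : list (formula L V)) : formula L V :=
  match l with nil => ftrue L V | cons p l => fand p (conjl l) end.

Lemma sat_conjl (V : Type) (l : list (formula L V)) (s : V -> M) :
  sat (conjl l) s <-> forall phi, List.In phi l -> sat phi s.
Proof.
elim: l => [|p l IH] /=; first by split=> // _; exists m0.
rewrite IH; split=> [[Hp Hl] phi [<-|]|H]; auto.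
Qed.

Lemma list_supp (V : Type) (l : list (formula L V)) : exists vs : list V,
  forall s s' : V -> M, (forall v, List.In v vs -> s v = s' v) ->
   forall phi, List.In phi l -> (sat phi s <-> sat phi s').
Proof.
elim: l => [|p l [vs Hvs]]; first by exists nil.
have [vp Hvp] := formula_supp M p.
exists (vp ++ vs)%list => s s' e phi [<-|Hphi].
- apply: Hvp => v Hv; apply: e; apply: List.in_or_app; auto.
- apply: (Hvs s s') => // v Hv; apply: e; apply: List.in_or_app; auto.
Qed.

Theorem satm (P W : Type) (p : P -> M) (Sig : formula L (P + W) -> Prop) :
  (forall (Q : Type) (i : Q -> P + W), injective i -> sat1 Q) ->
  (forall l, (forall phi, List.In phi l -> Sig phi) ->
     exists t : W -> M, forall phi, List.In phi l -> sat phi (penv p t)) ->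
  exists t : W -> M, forall phi, Sig phi -> sat phi (penv p t).
Proof.
move=> Hsat1 Hfs.
pose functional (G : W * M -> Prop) := forall w m m', G (w, m) -> G (w, m') -> m = m'.
pose FS (G : W * M -> Prop) := forall l, (forall phi, List.In phi l -> Sig phi) ->
  exists t : W -> M, (forall w m, G (w, m) -> t w = m) /\
     forall phi, List.In phi l -> sat phi (penv p t).
pose Good G := functional G /\ FS G.
have Good0 : Good (fun _ => False).
  split=> // l Hl; have [t Ht] := Hfs l Hl; by exists t.
have [A [[Afun AFS] Amax]] : exists A, Good A /\ forall B, (forall x, A x -> B x) -> Good B -> forall x, B x -> A x.
  apply: zorn_sets => F FG Ftot.
  set U := (fun x => exists2 X, F X & X x).
  have Ufun : functional U.
    move=> w m m' [X FX Xm] [Y FY Ym].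
    case: (Ftot X Y FX FY) => [XY|YX].
    + exact: (proj1 (FG Y FY)) w m m' (XY _ Xm) Ym.
    + exact: (proj1 (FG X FX)) w m m' Xm (YX _ Ym).
  split=> // l Hl.
  have [vs Hvs] := list_supp l.
  have [G [HG Gcov]] : exists G : W * M -> Prop, ((forall x, ~ G x) \/ F G) /\
      forall w, List.In (inr w) vs -> (exists m, U (w, m)) -> exists m, G (w, m).
    elim: vs {Hvs} => [|v vs [G [HG Gcov]]]; first by exists (fun _ => False); split; [left=> x|move=> w []].
    case: (classic (exists w m, v = inr w /\ U (w, m))) => [[w [m [-> [X FX Xm]]]]|nv].
    + case: HG => [G0|FG'].
      * exists X; split; first by right.
        move=> w' [[<-]|Hw'] Hu; first by exists m.
        have [m' Gm'] := Gcov w' Hw' Hu; case: (G0 _ Gm').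
      * case: (Ftot G X FG' FX) => [GX|XG].
        -- exists X; split; first by right.
           move=> w' [[<-]|Hw'] Hu; first by exists m.
           have [m' Gm'] := Gcov w' Hw' Hu; by exists m'; apply: GX.
        -- exists G; split; first by right.
           move=> w' [[<-]|Hw'] Hu; first by exists m; apply: XG.
           exact: Gcov.
    + exists G; split=> // w' [Hv|Hw'] Hu; last exact: Gcov.
      case: nv; case: Hu => m Hm; exists w', m; by split.
  have GU : forall x, G x -> U x.
    by case: HG => [G0 x /G0|FGG x Gx] //; exists G.
  have GoodG : Good G.
    case: HG => [G0|FGG]; last exact: FG.
    split=> [w m m' /G0 //|l' Hl'].
    have [t Ht] := Hfs l' Hl'; exists t; split=> // w m /G0 [].
  have [t [tG tsat]] := proj2 GoodG l Hl.
  pose t' (w : W) := match excluded_middle_informative (exists m, U (w, m)) with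
    | left e => proj1_sig (constructive_indefinite_description _ e)
    | right _ => t w end.
  have t'U : forall w m, U (w, m) -> t' w = m.
    move=> w m Um; rewrite /t'; case: excluded_middle_informative => [e|[]]; last by exists m.
    exact: Ufun (proj2_sig (constructive_indefinite_description _ e)) Um.
  exists t'; split=> // phi Hphi.
  apply/(Hvs (penv p t')  (penv p t)) => //; last exact: tsat.
  move=> [a|w] Hw //=.
  case: (classic (exists m, U (w, m))) => [Hu|nu].
  + have [m Gm] := Gcov w Hw Hu; by rewrite (tG _ _ Gm) (t'U _ _ (GU _ Gm)).
  + by rewrite /t'; case: excluded_middle_informative.
pose aval (w : W) := match excluded_middle_informative (exists m, A (w, m)) with
    | left e => proj1_sig (constructive_indefinite_description _ e)
    | right _ => m0 end.
have avalA : forall w m, A (w, m) -> aval w = m.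
  move=> w m Am; rewrite /aval; case: excluded_middle_informative => [e|[]]; last by exists m.
  exact: Afun (proj2_sig (constructive_indefinite_description _ e)) Am.
have Atot : forall w, exists m, A (w, m).
  move=> w0; apply: NNPP => nw0.
  pose Qp (v : P + W) := match v with inl _ => True | inr w => exists m, A (w, m) end.
  pose Q := {v | Qp v}.
  pose q (x : Q) := penv p aval (proj1_sig x).
  pose r (o : option Q) : P + W := match o with Some x => proj1_sig x | None => inr w0 end.
  have valinj : injective (fun x : Q => proj1_sig x).
    move=> [a ha] [b hb] /= e; subst b; f_equal; exact: proof_irrelevance.
  have rinj : injective r.
    move=> [x|] [y|] //=.
    - by move/valinj->.
    - case: x => [[a|w] hw] //= [] Ew; subst w; by case: nw0.
    - case: y => [[a|w] hw] //= [] Ew; subst w; by case: nw0.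
  pose Sig' (chi : formula L (option Q)) := exists l, (forall phi, List.In phi l -> Sig phi) /\
     forall s, sat chi s <-> exists t : P + W -> M, (forall y, t (r y) = s y) /\
        forall phi, List.In phi l -> sat phi t.
  have Sig'ex : forall l, (forall phi, List.In phi l -> Sig phi) -> exists chi, Sig' chi /\
      forall s, sat chi s <-> exists t : P + W -> M, (forall y, t (r y) = s y) /\
        forall phi, List.In phi l -> sat phi t.
    move=> l Hl; have [chi Hchi] := proj_lemma m0 (conjl l) rinj.
    have H' : forall s, sat chi s <-> exists t : P + W -> M, (forall y, t (r y) = s y) /\
        forall phi, List.In phi l -> sat phi t.
      move=> s; rewrite Hchi; split=> -[t [Ht1 Ht2]]; exists t; split=> //; exact/sat_conjl.
    by exists chi; split=> //; exists l.
  have [mstar Hmstar] : exists m, forall chi, Sig' chi -> sat chi (ext_env q m).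
    apply: (Hsat1 _ _ valinj q Sig') => cs Hcs.
    have [Lb [HLb Hcov]] : exists Lb, (forall phi, List.In phi Lb -> Sig phi) /\
        forall chi, List.In chi cs -> exists l, (forall phi, List.In phi l -> List.In phi Lb) /\
          forall s, sat chi s <-> exists t : P + W -> M, (forall y, t (r y) = s y) /\
             forall phi, List.In phi l -> sat phi t.
      elim: cs Hcs => [|c cs IH] Hcs; first by exists nil; split.
      have [Lb [HLb Hcov]] := IH (fun c' H => Hcs c' (or_intror H)).
      have [l [Hl Hc]] := Hcs c (or_introl erefl).
      exists (l ++ Lb)%list; split.
      - by move=> phi Hp; case: (List.in_app_or _ _ _ Hp); auto.
      - move=> chi [<-|Hchi].
        + exists l; split=> // phi Hphi; apply: List.in_or_app; auto.
        + have [l' [Hl' Hc']] := Hcov chi Hchi; exists l'; split=> // phi Hphi.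
          apply: List.in_or_app; auto.
    have [t [tA tsat]] := AFS Lb HLb.
    exists (t w0) => chi Hchi.
    have [l [Hl Hc]] := Hcov chi Hchi; apply/Hc.
    exists (penv p t); split; last by move=> phi /Hl /tsat.
    move=> [[[a|w] hw]|] //=.
    rewrite /q /=; case: hw => m Am; by rewrite (tA _ _ Am) (avalA _ _ Am).
  pose B (x : W * M) := A x \/ x = (w0, mstar).
  have GoodB : Good B.
    split.
    - move=> w m m' [Am|Em] [Am'|Em'].
      + exact: Afun Am Am'.
      + case: Em' => ? ?; subst; case: nw0; by exists m.
      + case: Em => ? ?; subst; case: nw0; by exists m'.
      + case: Em => ? ?; case: Em' => ? ?; by subst.
    - move=> l Hl.
      have [chi [Hchi Hc]] := Sig'ex l Hl.
      have [t' [Ht' Hsat']] := proj1 (Hc _) (Hmstar chi Hchi).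
      exists (fun w => t' (inr w)); split.
      + move=> w m [Am|Em]; last by case: Em => -> ->; exact: (Ht' None).
        have hw : Qp (inr w) by exists m.
        rewrite -[inr w]/(r (Some (exist Qp (inr w) hw))) Ht' /= /q /=.
        exact: avalA.
      + move=> phi Hphi; apply: (sat_ext1 _ (Hsat' phi Hphi)) => -[a|w] //=.
        by rewrite -[inl a]/(r (Some (exist Qp (inl a) I))) Ht'.
  have := Amax B (fun x Ax => or_introl Ax) GoodB (w0, mstar) (or_intror erefl).
  move=> Aw0; apply: nw0; by exists mstar.
exists aval => phi Hphi.
have [t [tA tsat]] := AFS (cons phi nil) (fun phi' H => match H with
   | or_introl e => eq_ind phi Sig Hphi phi' e | or_intror f => match f with end end).
apply: (sat_ext1 _ (tsat phi (or_introl erefl))) => -[a|w] //=.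
have [m Am] := Atot w; by rewrite (tA _ _ Am) (avalA _ _ Am).
Qed.

End Satm.

Section Card.

Definition inj (X Y : Type) := exists f : X -> Y, injective f.
Definition covered (X : Type) := exists l : list X, forall x, List.In x l.

Lemma inj_trans (X Y Z : Type) : inj X Y -> inj Y Z -> inj X Z.
Proof. move=> [f fi] [g gi]; exists (fun x => g (f x)) => a b /gi /fi //. Qed.

Lemma nat_not_covered (X : Type) : inj nat X -> covered X -> False.
Proof.
move=> [f finj] [l Hl].
pose n := List.length l.
have H : forall k, {i : 'I_n | List.nth i l (f 0) = f k}.
  move=> k; apply: constructive_indefinite_description.
  have [i [Hi Ei]] := List.In_nth l (f k) (f 0) (Hl (f k)).
  by exists (Ordinal (introT ltP Hi)).
pose g (k : 'I_n.+1) : 'I_n := proj1_sig (H k).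
have ginj : injective g.
  move=> a b Eab; apply: val_inj; apply: finj.
  by rewrite -(proj2_sig (H a)) -(proj2_sig (H b)) -/(g a) Eab.
by have := leq_card g ginj; rewrite !card_ord ltnn.
Qed.

Lemma covered_or_nat (X : Type) : covered X \/ inj nat X.
Proof.
case: (classic (covered X)) => [|nc]; [by left|right].
have H : forall s : list X, {x | ~ List.In x s}.
  move=> s; apply: constructive_indefinite_description.
  apply: NNPP => nx; apply: nc; exists s => x; apply: NNPP => nix; apply: nx; by exists x.
pose next (s : list X) := proj1_sig (H s).
pose pref := fix pref (n : nat) : list X := match n with 0 => nil | S n => cons (next (pref n)) (pref n) end.
pose e n := next (pref n).
have Hin : forall n k, k < n -> List.In (e k) (pref n).
  elim=> [|n IH] k //= Hk.
  rewrite ltnS leq_eqVlt in Hk; case/orP: Hk => [/eqP->|kn]; [by left|by right; apply: IH].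
exists e => i j Eij.
case: (ltngtP i j) => [ij|ji|//].
- by case: (proj2_sig (H (pref j))); rewrite -/(next _) -/(e j) -Eij; apply: Hin.
- by case: (proj2_sig (H (pref i))); rewrite -/(next _) -/(e i) Eij; apply: Hin.
Qed.

Lemma comparability (X Y : Type) : inj X Y \/ inj Y X.
Proof.
pose P (G : X * Y -> Prop) := (forall x y y', G (x, y) -> G (x, y') -> y = y') /\
   (forall x x' y, G (x, y) -> G (x', y) -> x = x').
have [A [[Af Ai] Amax]] : exists A, P A /\ forall B, (forall z, A z -> B z) -> P B -> forall z, B z -> A z.
  apply: zorn_sets => F FP Ftot; split.
  - move=> x y y' [G FG Gy] [G' FG' Gy'].
    case: (Ftot G G' FG FG') => [GG|GG].
    + exact: (proj1 (FP G' FG')) _ _ _ (GG _ Gy) Gy'.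
    + exact: (proj1 (FP G FG)) _ _ _ Gy (GG _ Gy').
  - move=> x x' y [G FG Gy] [G' FG' Gy'].
    case: (Ftot G G' FG FG') => [GG|GG].
    + exact: (proj2 (FP G' FG')) _ _ _ (GG _ Gy) Gy'.
    + exact: (proj2 (FP G FG)) _ _ _ Gy (GG _ Gy').
case: (classic (forall x, exists y, A (x, y))) => [Hx|nx].
  left; pose f x := proj1_sig (constructive_indefinite_description _ (Hx x)).
  exists f => a b Eab; apply: (Ai a b (f a)); first exact: proj2_sig (constructive_indefinite_description _ (Hx a)).
  rewrite Eab; exact: proj2_sig (constructive_indefinite_description _ (Hx b)).
case: (classic (forall y, exists x, A (x, y))) => [Hy|ny].
  right; pose f y := proj1_sig (constructive_indefinite_description _ (Hy y)).
  exists f => a b Eab; apply: (Af (f a) a b); first exact: proj2_sig (constructive_indefinite_description _ (Hy a)).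
  rewrite Eab; exact: proj2_sig (constructive_indefinite_description _ (Hy b)).
have [x0 nx0] : exists x0, forall y, ~ A (x0, y).
  apply: NNPP => H; apply: nx => x; apply: NNPP => H'; apply: H; exists x => y Ay; apply: H'; by exists y.
have [y0 ny0] : exists y0, forall x, ~ A (x, y0).
  apply: NNPP => H; apply: ny => y; apply: NNPP => H'; apply: H; exists y => x Ax; apply: H'; by exists x.
pose B z := A z \/ z = (x0, y0).
have PB : P B.
  split.
  - move=> x y y' [Ay|Ey] [Ay'|Ey'].
    + exact: Af Ay Ay'.
    + case: Ey' => ? ?; subst; by case: (nx0 y).
    + case: Ey => ? ?; subst; by case: (nx0 y').
    + case: Ey => ? ?; case: Ey' => ? ?; by subst.
  - move=> x x' y [Ay|Ey] [Ay'|Ey'].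
    + exact: Ai Ay Ay'.
    + case: Ey' => ? ?; subst; by case: (ny0 x).
    + case: Ey => ? ?; subst; by case: (ny0 x').
    + case: Ey => ? ?; case: Ey' => ? ?; by subst.
by case: (nx0 y0 (Amax B (fun z Az => or_introl Az) PB _ (or_intror erefl))).
Qed.

End Card.

From Stdlib Require Import Lia.
From mathcomp Require Import zify.

Section Card2.

Lemma emiT (P : Prop) (p : P) (T : Type) (a b : T) :
  (if excluded_middle_informative P then a else b) = a.
Proof. by case: excluded_middle_informative. Qed.
Lemma emiF (P : Prop) (p : ~ P) (T : Type) (a b : T) :
  (if excluded_middle_informative P then a else b) = b.
Proof. by case: excluded_middle_informative. Qed.

Lemma double_inj (X : Type) : inj nat X -> inj (X + X) X.
Proof.
move=> Hnat.
pose P (F : (nat -> X) -> Prop) := (forall e, F e -> injective e) /\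
  (forall e e', F e -> F e' -> e <> e' -> forall n n', e n <> e' n').
have [A [[Ainj Adisj] Amax]] : exists A, P A /\ forall B, (forall z, A z -> B z) -> P B -> forall z, B z -> A z.
  apply: zorn_sets => F FP Ftot; split.
  - by move=> e [G FG Ge]; apply: (proj1 (FP G FG)).
  - move=> e e' [G FG Ge] [G' FG' Ge'].
    case: (Ftot G G' FG FG') => [GG|GG].
    + exact: (proj2 (FP G' FG')) _ _ (GG _ Ge) Ge'.
    + exact: (proj2 (FP G FG)) _ _ Ge (GG _ Ge').
pose C (x : X) := exists e, A e /\ exists n, e n = x.
have uniq : forall e e' n n', A e -> A e' -> e n = e' n' -> e = e' /\ n = n'.
  move=> e e' n n' Ae Ae' E.
  case: (classic (e = e')) => [ee|ne]; last by case: (Adisj _ _ Ae Ae' ne n n').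
  subst e'; split=> //; exact: (Ainj e Ae).
pose R := {x | ~ C x}.
have [[r Hr]|[h hinj]] := covered_or_nat R; last first.
  pose e' n := proj1_sig (h n).
  have e'inj : injective e' by move=> a b /(@eq_sig_hprop _ _ (fun x => proof_irrelevance _)) /hinj.
  pose B e := A e \/ e = e'.
  have PB : P B.
    split; first by move=> e [Ae|->] //; exact: Ainj.
    have key : forall e n n', A e -> e n <> e' n'.
      move=> e n n' Ae E; apply: (proj2_sig (h n')); rewrite -/(e' n') -E; exists e; split=> //; by exists n.
    move=> e1 e2 [A1|->] [A2|->] ne n n'.
    - exact: Adisj.
    - exact: key.
    - by move=> E; apply: (key e2 n' n A2); rewrite E.
    - by [].
  have Ae' := Amax B (fun z Az => or_introl Az) PB e' (or_intror erefl).
  case: (proj2_sig (h 0)); exists e'; split=> //; by exists 0.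
case: (classic (exists e0, A e0)) => [[e0 Ae0]|nA]; last first.
  case: (nat_not_covered Hnat); exists (List.map (fun x : R => proj1_sig x) r) => x.
  have nCx : ~ C x by move=> [e [Ae _]]; apply: nA; by exists e.
  exact: (List.in_map _ _ (exist _ x nCx) (Hr _)).
pose rl := List.map (fun x : R => proj1_sig x) r.
pose m := List.length rl.
have Hidx : forall x, ~ C x -> exists i, (i < m)%coq_nat /\ List.nth i rl x = x.
  move=> x nCx; apply: List.In_nth; exact: (List.in_map _ _ (exist _ x nCx) (Hr _)).
pose idx (x : X) : nat := match excluded_middle_informative (exists i, (i < m)%coq_nat /\ List.nth i rl x = x) with
  | left e => proj1_sig (constructive_indefinite_description _ e) | right _ => 0 end.
have idxP : forall x, ~ C x -> (idx x < m)%coq_nat /\ List.nth (idx x) rl x = x.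
  move=> x nCx; rewrite /idx; case: excluded_middle_informative => [e|[]]; last exact: Hidx.
  exact: proj2_sig (constructive_indefinite_description _ e).
pose pick (x : X) : (nat -> X) * nat := match excluded_middle_informative (C x) with
  | left e => let ee := constructive_indefinite_description _ e in
      (proj1_sig ee, proj1_sig (constructive_indefinite_description _ (proj2 (proj2_sig ee))))
  | right _ => (e0, 0) end.
have pickP : forall x, C x -> A (pick x).1 /\ (pick x).1 (pick x).2 = x.
  move=> x Cx; rewrite /pick; case: excluded_middle_informative => [e|//] /=.
  set ee := constructive_indefinite_description _ e.
  split; first exact: proj1 (proj2_sig ee).
  exact: proj2_sig (constructive_indefinite_description _ (proj2 (proj2_sig ee))).
pose code (x : X) : (nat -> X) * nat := match excluded_middle_informative (C x) with
  | left _ => ((pick x).1, if excluded_middle_informative ((pick x).1 = e0) then ((pick x).2 + m)%coq_nat else (pick x).2)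
  | right _ => (e0, idx x) end.
have codeA : forall x, A (code x).1.
  move=> x; rewrite /code; case: excluded_middle_informative => [Cx|//] /=; exact: (proj1 (pickP x Cx)).
have codeC : forall x, C x -> code x = ((pick x).1, if excluded_middle_informative ((pick x).1 = e0) then ((pick x).2 + m)%coq_nat else (pick x).2).
  by move=> x Cx; rewrite /code; case: excluded_middle_informative.
have codeN : forall x, ~ C x -> code x = (e0, idx x).
  by move=> x nCx; rewrite /code; case: excluded_middle_informative.
have codeinj : injective code.
  move=> x x'.
  case: (classic (C x)) => [Cx|nCx]; case: (classic (C x')) => [Cx'|nCx'];
    rewrite ?(codeC _ Cx) ?(codeN _ nCx) ?(codeC _ Cx') ?(codeN _ nCx').
  - have [Ax Ex] := pickP x Cx; have [Ax' Ex'] := pickP x' Cx'.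
    case=> E1; rewrite -E1; case: (classic ((pick x).1 = e0)) => H0;
      rewrite ?(emiT H0) ?(emiF H0) => E2.
    + by rewrite -Ex -Ex' E1 (_ : (pick x).2 = (pick x').2) //; lia.
    + by rewrite -Ex -Ex' E1 E2.
  - case=> E1; rewrite (emiT E1) => E2.
    have := proj1 (idxP _ nCx'); lia.
  - case=> E1; rewrite (emiT (esym E1)) => E2.
    have := proj1 (idxP _ nCx); lia.
  - case=> E2; have [_ h1] := idxP _ nCx; have [l2 h2] := idxP _ nCx'.
    rewrite -h1 E2 (List.nth_indep rl x x' l2) h2 //.
pose F (u : X + X) : X := match u with
  | inl x => (code x).1 (2 * (code x).2)%coq_nat
  | inr x => (code x).1 (2 * (code x).2 + 1)%coq_nat end.
exists F => u u'.
have gen : forall x x' b b', (code x).1 (2 * (code x).2 + b)%coq_nat = (code x').1 (2 * (code x').2 + b')%coq_nat ->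
    b < 2 -> b' < 2 -> x = x' /\ b = b'.
  move=> x x' b b' E hb hb'.
  have [E1 E2] := uniq _ _ _ _ (codeA x) (codeA x') E.
  have E3 : (code x).2 = (code x').2 /\ b = b'.
    clear E; case: b hb E2 => [|[|//]] _; case: b' hb' => [|[|//]] _; lia.
  split; last exact: E3.2.
  apply: codeinj; case: (code x) E1 E3 => a b0; case: (code x') => a' b0' /= -> [-> _] //.
case: u => x; case: u' => x' /= E.
- by have [-> _] := gen x x' 0 0 ltac:(rewrite -!plus_n_O; exact E) isT isT.
- by have [_ ] := gen x x' 0 1 ltac:(rewrite -!plus_n_O; exact E) isT isT.
- by have [_ ] := gen x x' 1 0 ltac:(rewrite -!plus_n_O; exact E) isT isT.
- by have [-> _] := gen x x' 1 1 E isT isT.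
Qed.

End Card2.

Section Fin.
Variable L : signature.
Variable M : structure L.

Lemma covered_sum (X Y : Type) : covered X -> covered Y -> covered (X + Y).
Proof.
move=> [l Hl] [l' Hl']; exists (List.map inl l ++ List.map inr l')%list => -[x|y];
  apply: List.in_or_app; [left|right]; exact: List.in_map.
Qed.

Lemma small_sum (X Y : Type) : inj nat M -> small M X -> small M Y -> small M (X + Y).
Proof.
move=> Hnat [[fx fxi] nx] [[fy fyi] ny]; split.
  have [d di] := double_inj Hnat.
  exists (fun u => d (match u with inl x => inl (fx x) | inr y => inr (fy y) end)).
  move=> [x|y] [x'|y'] /di //= [] E; [by rewrite (fxi _ _ E)|by rewrite (fyi _ _ E)].
move=> HM.
case: (comparability X Y) => [[g gi]|[g gi]].
- have HYY : inj M (Y + Y).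
    apply: (inj_trans HM); exists (fun u => match u with inl x => inl (g x) | inr y => inr y end).
    move=> [x|y] [x'|y'] //= [] E; [by rewrite (gi _ _ E)|by rewrite E].
  case: (covered_or_nat Y) => [cY|nY].
  + by apply: (nat_not_covered (inj_trans Hnat HYY)); apply: covered_sum.
  + by apply: ny; apply: (inj_trans HYY); apply: double_inj.
- have HXX : inj M (X + X).
    apply: (inj_trans HM); exists (fun u => match u with inl x => inl x | inr y => inr (g y) end).
    move=> [x|y] [x'|y'] //= [] E; [by rewrite E|by rewrite (gi _ _ E)].
  case: (covered_or_nat X) => [cX|nX].
  + by apply: (nat_not_covered (inj_trans Hnat HXX)); apply: covered_sum.
  + by apply: nx; apply: (inj_trans HXX); apply: double_inj.
Qed.

Lemma small_sub (Q K : Type) : small M K -> inj Q K -> small M Q.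
Proof.
move=> [HK nK] HQ; split; first exact: inj_trans HQ HK.
by move=> HMQ; apply: nK; apply: inj_trans HMQ HQ.
Qed.

Lemma covered_sat1 (Q : Type) : covered M -> sat1 M Q.
Proof.
move=> [l Hl] q Sig Hfs.
apply: NNPP => H.
have H' : forall m, exists phi, Sig phi /\ ~ sat phi (ext_env q m).
  move=> m; apply: NNPP => nm; apply: H; exists m => phi Sp; apply: NNPP => ns; apply: nm; by exists phi.
pose ph m := proj1_sig (constructive_indefinite_description _ (H' m)).
have Hsub : forall phi, List.In phi (List.map ph l) -> Sig phi.
  move=> phi /List.in_map_iff [m' [<- _]].
  exact: (proj1 (proj2_sig (constructive_indefinite_description _ (H' m')))).
have [m Hm] := Hfs _ Hsub.
apply: (proj2 (proj2_sig (constructive_indefinite_description _ (H' m)))).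
apply: Hm; exact: List.in_map.
Qed.

End Fin.

Section FinHom.
Variable L : signature.
Variable M : structure L.

Lemma covered_inj_surj (f : M -> M) : covered M -> injective f -> forall y, exists x, f x = y.
Proof.
move=> [l Hl] finj y.
pose n := List.length l.
have H : forall x : M, {i : 'I_n | List.nth i l y = x}.
  move=> x; apply: constructive_indefinite_description.
  have [i [Hi Ei]] := List.In_nth l x y (Hl x).
  by exists (Ordinal (introT ltP Hi)).
pose idx x := proj1_sig (H x).
have idxK : forall x, List.nth (idx x) l y = x := fun x => proj2_sig (H x).
pose S := [set i : 'I_n | idx (List.nth i l y) == i].
have idxS : forall x, idx x \in S by move=> x; rewrite inE idxK.
pose F (i : 'I_n) := idx (f (List.nth i l y)).
have FS : F @: S \subset S by apply/subsetP => _ /imsetP[i _ ->]; exact: idxS.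
have Finj : {in S &, injective F}.
  move=> i j; rewrite !inE => /eqP Ei /eqP Ej EF.
  rewrite /F in EF; have : f (List.nth i l y) = f (List.nth j l y) by rewrite -(idxK (f (List.nth i l y))) EF idxK.
  by move/finj => Enth; rewrite -Ei -Ej Enth.
have eqS : F @: S = S.
  apply/eqP; rewrite eqEcard FS /= card_in_imset //.
have := idxS y; rewrite -eqS => /imsetP[i _ Ei].
exists (List.nth i l y); by rewrite -[RHS]idxK Ei /F idxK.
Qed.

Lemma same_type_sub (K K' : Type) (h : K' -> K) (u v : K -> M) :
  same_type u v -> same_type (fun k => u (h k)) (fun k => v (h k)).
Proof. by move=> Huv phi; rewrite -(sat_fmap phi h u) -(sat_fmap phi h v) Huv. Qed.

Lemma covered_hom (m00 : M) (HM : monster M) (K : Type) (u v : K -> M) :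
  covered M -> same_type u v -> exists f, automorphism f /\ forall k, f (u k) = v k.
Proof.
move=> Mcov Huv.
have eqf : forall k k', u k = u k' <-> v k = v k'.
  by move=> k k'; apply: (Huv (feq (tvar L k) (tvar L k'))).
pose m0 := match excluded_middle_informative (exists m, forall k, u k <> m) with
  | left e => proj1_sig (constructive_indefinite_description _ e) | right _ => m00 end.
have m0P : (exists m, forall k, u k <> m) -> forall k, u k <> m0.
  by move=> e; rewrite /m0; case: excluded_middle_informative => // e'; exact: proj2_sig (constructive_indefinite_description _ e').
pose repo (m : M) : option K := match excluded_middle_informative (exists k, u k = m) with
  | left e => Some (proj1_sig (constructive_indefinite_description _ e)) | right _ => None end.
have repoP : forall k, exists k', repo (u k) = Some k' /\ u k' = u k.
  move=> k; rewrite /repo; case: excluded_middle_informative => [e|[]]; last by exists k.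
  eexists; split; first reflexivity; exact: proj2_sig (constructive_indefinite_description _ e).
pose K1p k := u k <> m0 /\ repo (u k) = Some k.
pose K1 := {k | K1p k}.
have K1inj : injective (fun x : K1 => u (proj1_sig x)).
  move=> [k hk] [k' hk'] /= E.
  have E' : k = k' by move: (proj2 hk) (proj2 hk'); rewrite E => -> [].
  subst k'; f_equal; exact: proof_irrelevance.
have sK1 : small M K1.
  split; first by exists (fun x : K1 => u (proj1_sig x)).
  move=> [g gi].
  have [m Hm] := covered_inj_surj Mcov (fun x y E => gi _ _ (K1inj _ _ E)) m0.
  by case: (proj2_sig (g m)) => + _; apply.
have [f [faut fE]] := proj2 HM K1 _ _ sK1 (same_type_sub (fun x : K1 => proj1_sig x) Huv).
exists f; split=> // k.
have finj : injective f by exact: bij_inj (proj1 faut).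
case: (classic (u k = m0)) => [uk|uk]; last first.
  have [k' [Hk' Ek']] := repoP k.
  have K1k' : K1p k' by split; [rewrite Ek'|rewrite Ek'].
  by rewrite -Ek' (fE (exist _ k' K1k')) /=; apply/eqf.
have usurj : forall m, exists k', u k' = m.
  move=> m; apply: NNPP => nm.
  have := m0P (ex_intro _ m (fun k' E => nm (ex_intro _ k' E))) k; by rewrite uk.
have repoS : forall m, exists k', repo m = Some k' /\ u k' = m.
  move=> m; have [k0 <-] := usurj m; exact: repoP.
pose rep (m : M) : K := odflt k (repo m).
have repE : forall m, repo m = Some (rep m) /\ u (rep m) = m.
  by move=> m; have [k' [E1 E2]] := repoS m; rewrite /rep E1.
have repK1 : forall m, m <> m0 -> K1p (rep m).
  move=> m nm; have [E1 E2] := repE m; split; by rewrite E2.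
pose phi (m : M) := v (rep m).
have phiinj : injective phi.
  move=> m m' /eqf; by rewrite !(proj2 (repE _)).
have [ms Ems] := covered_inj_surj Mcov phiinj (f m0).
case: (classic (ms = m0)) => [E|nE].
- rewrite uk -Ems E /phi; apply/eqf; by rewrite (proj2 (repE _)).
- have := fE (exist _ (rep ms) (repK1 ms nE)); rewrite /= (proj2 (repE _)) -/(phi ms) Ems.
  by move/finj => E'; case: nE.
Qed.


End FinHom.

Section Main.
Variable L : signature.
Variable M : structure L.

Lemma E_aut (I : Type) (E : (I -> M) -> (I -> M) -> Prop) (HEdef : type_definable2 E)
  (f : M -> M) (x y : I -> M) : automorphism f -> E x y -> E (fun i => f (x i)) (fun i => f (y i)).
Proof.
move=> Hf; have [Sig HSig] := HEdef; rewrite !HSig => H phi Hphi.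
have := H phi Hphi; rewrite -(sat_aut Hf); apply: sat_ext1 => -[i|i] //.
Qed.

Lemma backward (I : Type) (a : I -> M) (E : (I -> M) -> (I -> M) -> Prop)
  (HE : fo_equivalence E) (HEdef : type_definable2 E)
  (H : type_definable2 (equiv_over E a (J:=I))) : normal_hyp E a.
Proof.
move=> g ginv h gaut gK ginvK haut hfix.
have [Sig HSig] := H.
have Hb : equiv_over E a (fun i => ginv (a i)) (fun i => h (ginv (a i))).
  by exists h.
move/HSig: Hb => Hb.
have Hb' : forall phi, Sig phi -> sat phi (fun v => match v with
     | inl i => g (ginv (a i)) | inr i => g (h (ginv (a i))) end).
  move=> phi /Hb; rewrite -(sat_aut gaut); apply: sat_ext1 => -[i|i] //.
move/HSig: Hb' => [f [faut [ffix fE]]].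
rewrite /fixes.
have -> : (fun i => g (h (ginv (a i)))) = (fun i => f (a i)).
  apply: functional_extensionality => i; by rewrite -fE ginvK.
exact: ffix.
Qed.

Lemma core (m0 : M) (I J : Type) (a : I -> M) (E : (I -> M) -> (I -> M) -> Prop)
  (HE : fo_equivalence E) (HEdef : type_definable2 E) (Hnorm : normal_hyp E a)
  (HhomI : forall c : I -> M, same_type a c -> exists f, automorphism f /\ forall i, f (a i) = c i)
  (HhomJI : forall u v : J + I -> M, same_type u v -> exists f, automorphism f /\ forall x, f (u x) = v x)
  (Hsat1 : forall (Q : Type) (i : Q -> (J + J) + (I + I)), injective i -> sat1 M Q) :
  type_definable2 (equiv_over E a (J:=J)).
Proof.
have [HEr [HEs HEt]] := HE.
have [SigE HSigE] := HEdef.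
pose Sigma (chi : formula L (J + J)) := forall b c, equiv_over E a b c -> sat chi (penv b c).
exists Sigma => b c; split; first by move=> Hbc chi Hchi; exact: Hchi.
move=> Hall.
pose rho1 (x : J + I) : (J + J) + (I + I) := match x with inl j => inl (inl j) | inr i => inr (inl i) end.
pose rho2 (x : J + I) : (J + J) + (I + I) := match x with inl j => inl (inr j) | inr i => inr (inr i) end.
pose sig1 (i : I) : (J + J) + (I + I) := inr (inl i).
pose sigE (x : I + I) : (J + J) + (I + I) := inr x.
pose Sig (psi : formula L ((J + J) + (I + I))) :=
  (exists theta : formula L (J + I), psi = fiff (fmap theta rho1) (fmap theta rho2)) \/
  (exists alpha, sat alpha a /\ psi = fmap alpha sig1) \/
  (exists eps, SigE eps /\ psi = fmap eps sigE).
have Hfs : forall l, (forall phi, List.In phi l -> Sig phi) ->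
    exists t : I + I -> M, forall phi, List.In phi l -> sat phi (penv (penv b c) t).
  move=> l Hl.
  have inlinj : injective (@inl (J + J) (I + I)) by move=> x y [].
  have [chi Hchi] := proj_lemma m0 (conjl l) inlinj.
  have Schi : Sigma chi.
    move=> b' c' [f [faut [ffix fE]]].
    apply/Hchi; exists (penv (penv b' c') (penv a (fun i => f (a i)))); split; first by move=> y.
    apply/(sat_conjl m0) => phi /Hl [[theta ->]|[[alpha [Ha ->]]|[eps [Heps ->]]]].
    + apply/sat_fiff; rewrite !sat_fmap.
      transitivity (sat theta (penv b' a)); first by apply: sat_ext => -[j|i].
      rewrite -(sat_aut faut theta (penv b' a)); apply: sat_ext => -[j|i] //=; by rewrite fE.
    + by rewrite sat_fmap.
    + rewrite sat_fmap; have := proj1 (HSigE _ _) (HEs _ _ ffix) eps Heps.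
      by apply: sat_ext1 => -[i|i].
  have [t' [Ht' Hsat']] := proj1 (Hchi (penv b c)) (Hall chi Schi).
  exists (fun x => t' (inr x)) => phi Hphi.
  apply: (sat_ext1 _ (proj1 (sat_conjl m0 l t') Hsat' phi Hphi)).
  by move=> [x|x] //=; rewrite Ht'.
have [t Ht] := @satm _ _ m0 _ _ (penv b c) Sig Hsat1 Hfs.
pose T := penv (penv b c) t.
pose a1 (i : I) := t (inl i).
pose a2 (i : I) := t (inr i).
have Ha1 : same_type a a1.
  have H1 : forall alpha, sat alpha a -> sat alpha a1.
    move=> alpha Ha; have := Ht _ (or_intror (or_introl (ex_intro _ alpha (conj Ha erefl)))).
    by rewrite sat_fmap.
  move=> alpha; split; first exact: H1.
  move=> Ha1; apply: NNPP => na; exact: (H1 (fneg alpha) na Ha1).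
have [h [haut hE]] := HhomI a1 Ha1.
have Hba : same_type (penv b a1) (penv c a2).
  move=> theta; have := Ht _ (or_introl (ex_intro _ theta erefl)).
  move/sat_fiff; rewrite !sat_fmap => H.
  rewrite (sat_ext theta (s:=penv b a1) (s':= fun v => penv (penv b c) t (rho1 v))); last by case.
  rewrite (sat_ext theta (s:=penv c a2) (s':= fun v => penv (penv b c) t (rho2 v))); last by case.
  exact: H.
have [g [gaut gE]] := HhomJI _ _ Hba.
have E12 : E a1 a2.
  apply/HSigE => eps Heps; have := Ht _ (or_intror (or_intror (ex_intro _ eps (conj Heps erefl)))).
  by rewrite sat_fmap; apply: sat_ext1 => -[i|i].
have [[hinv hK hinvK] _] := haut.
have hinvaut : automorphism hinv := aut_inv haut hK hinvK.
pose k x := hinv (g (h x)).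
have kaut : automorphism k := aut_comp hinvaut (aut_comp gaut haut).
have kfix : fixes E a k.
  rewrite /fixes /k.
  have -> : (fun i => hinv (g (h (a i)))) = (fun i => hinv (a2 i)).
    by apply: functional_extensionality => i; rewrite hE (gE (inr i)).
  have Ha : (fun i => hinv (a1 i)) = a by apply: functional_extensionality => i; rewrite -hE hK.
  have := E_aut HEdef hinvaut (HEs _ _ E12); by rewrite Ha.
have gfix := Hnorm h hinv k haut hK hinvK kaut kfix.
exists g; split=> //; split.
- move: gfix; rewrite /fixes /k.
  have -> // : (fun i => h (hinv (g (h (hinv (a i)))))) = (fun i => g (a i)).
  by apply: functional_extensionality => i; rewrite !hinvK.
- by move=> j; exact: (gE (inl j)).
Qed.

End Main.

Unset Implicit Arguments.

Theorem mainTheorem3 (L : signature) (M : structure L) (HM : monster M)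
  (I : Type) (a : I -> M) (E : (I -> M) -> (I -> M) -> Prop)
  (HI : small M I) (HE : fo_equivalence E) (HEdef : type_definable2 E) :
  normal_hyp E a <->
  (forall J : Type, small M J -> type_definable2 (equiv_over E a (J:=J))).
Proof.
split; last first.
  move=> H; apply: backward => //; exact: H.
move=> Hnorm J HJ.
have [[fI fIi] nI] := HI.
have m0ex : exists m : M, True.
  apply: NNPP => nm; apply: nI; exists (fun m => match nm (ex_intro _ m Logic.I) with end).
  by move=> x; case: (nm (ex_intro _ x Logic.I)).
pose m0 := proj1_sig (constructive_indefinite_description _ m0ex).
case: (covered_or_nat M) => [Mcov|Mnat].
- apply: (core m0) => //.
  + by move=> c Hc; exact: (covered_hom m0 HM Mcov Hc).
  + by move=> u v Huv; exact: (covered_hom m0 HM Mcov Huv).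
  + by move=> Q i _; exact: covered_sat1.
- apply: (core m0) => //.
  + by move=> c Hc; exact: (proj2 HM I a c HI Hc).
  + move=> u v Huv; apply: (proj2 HM) => //; exact: small_sum.
  + move=> Q i iinj; move=> q Sig Hfs; apply: (proj1 HM) => //.
    apply: (small_sub (K := (J + J) + (I + I))); last by exists i.
    by apply: small_sum => //; apply: small_sum.
Qed.
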